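(* Let $(C_q,\varphi)$ be a complex unit gain cycle of length $q\ge 3$. Then $r(C_q,\varphi)=2q-2c(C_q)-2\alpha(C_q)$ if and only if either $q$ is even and $\varphi(C_q)=(-1)^{q/2}$, or $q$ is odd and $\mathrm{Re}\big((-1)^{(q-1)/2}\varphi(C_q)\big)=0$.
   Context: A complex unit gain graph $(G,\varphi)$ is a simple finite graph $G$ with a gain function $\varphi$ assigning to each oriented edge $e_{ij}$ a complex number of modulus $1$ with $\varphi(e_{ji})=\overline{\varphi(e_{ij})}$; its adjacency matrix has $(i,j)$-entry $\varphi(e_{ij})$ for adjacent $v_i,v_j$ and $0$ otherwise, and $r(G,\varphi)$ is its rank. $\alpha$ is the independence number and $c(G)=|E(G)|-|V(G)|+\omega(G)$ the cyclomatic number ($\omega$ = number of components). For a cycle $C_q=u_1\cdots u_qu_1$, $\varphi(C_q)=\varphi(e_{u_1u_2})\cdots\varphi(e_{u_{q-1}u_q})\varphi(e_{u_qu_1})$. *)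

(* Defs.v *)
From HB Require Import structures.
From mathcomp Require Import all_boot all_order all_algebra.
Set Implicit Arguments. Unset Strict Implicit. Unset Printing Implicit Defensive.
Import Order.TTheory GRing.Theory Num.Theory.
Local Open Scope ring_scope.

Definition simple_graph (T : finType) (e : rel T) : Prop :=
  symmetric e /\ irreflexive e.

Definition independent (T : finType) (e : rel T) (S : {set T}) : bool :=
  [forall x in S, forall y in S, ~~ e x y].

Definition alpha (T : finType) (e : rel T) : nat :=
  \max_(S : {set T} | independent e S) #|S|.

(* Number of (undirected) edges: each edge gives two ordered adjacent pairs. *)
Definition nedges (T : finType) (e : rel T) : nat :=
  (#|[set p : T * T | e p.1 p.2]| %/ 2)%N.

Definition ncomp (T : finType) (e : rel T) : nat := n_comp e T.

Definition cyclomatic (T : finType) (e : rel T) : int :=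
  (nedges e)%:Z - (#|T|)%:Z + (ncomp e)%:Z.

Definition cycle_adj (q : nat) : rel 'I_q :=
  fun i j => (j == ordS i) || (i == ordS j).

Definition unit_gain (C : numClosedFieldType) (T : finType) (e : rel T)
    (phi : T -> T -> C) : Prop :=
  forall i j, e i j -> `|phi i j| = 1 /\ phi j i = (phi i j)^*.

Definition gain_adj (C : numClosedFieldType) (n : nat) (e : rel 'I_n)
    (phi : 'I_n -> 'I_n -> C) : 'M[C]_n :=
  \matrix_(i, j) (if e i j then phi i j else 0).

Definition gain_rank (C : numClosedFieldType) (n : nat) (e : rel 'I_n)
    (phi : 'I_n -> 'I_n -> C) : nat := \rank (gain_adj e phi).

Definition cycle_gain (C : numClosedFieldType) (q : nat)
    (phi : 'I_q -> 'I_q -> C) : C :=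
  \prod_(i < q) phi i (ordS i).

(* Main.v *)
Require Import Defs.
From HB Require Import structures.
From mathcomp Require Import all_boot all_order all_algebra zify ring.
Import Order.TTheory GRing.Theory Num.Theory.
Set Implicit Arguments. Unset Strict Implicit.

Lemma ordS_val n (i : 'I_n) : nat_of_ord (ordS i) = if i.+1 < n then i.+1 else 0%N.
Proof.
rewrite /ordS /=; case: ifP => h; first by rewrite modn_small.
have -> : i.+1 = n by have := ltn_ord i; lia.
by rewrite modnn.
Qed.

Lemma ordSS_neq n (i : 'I_n) : (3 <= n)%N -> ordS (ordS i) != i.
Proof.
move=> h3; apply/eqP => /(congr1 (@nat_of_ord n)).
have e1 := ordS_val i; have e2 := ordS_val (ordS i); have hi := ltn_ord i.
rewrite e2; move: e1; case: ifP => h1 e1; rewrite e1; case: ifP; lia.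
Qed.

Lemma ordS_neq_pred n (i : 'I_n) : (3 <= n)%N -> ordS i != ord_pred i.
Proof.
move=> h3; apply/eqP => h; have := ordSS_neq i h3.
by rewrite h ord_predK eqxx.
Qed.

Lemma ordS_neq n (i : 'I_n) : (2 <= n)%N -> ordS i != i.
Proof.
move=> h2; apply/eqP => /(congr1 (@nat_of_ord n)); rewrite ordS_val.
have := ltn_ord i; case: ifP => h1; lia.
Qed.

Lemma cycle_adjE n (i j : 'I_n) : cycle_adj i j = (j == ordS i) || (j == ord_pred i).
Proof.
rewrite /cycle_adj; congr (_ || _); apply/eqP/eqP => [->|->]; by rewrite ?ordSK ?ord_predK.
Qed.

Lemma cycle_adj_sym n : symmetric (@cycle_adj n).
Proof. by move=> i j; rewrite /cycle_adj orbC. Qed.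

Lemma nedges_cycle n : (3 <= n)%N -> nedges (@cycle_adj n) = n.
Proof.
move=> h3; rewrite /nedges -sum1dep_card.
rewrite (eq_bigl (fun p : 'I_n * 'I_n => xpredT p.1 && cycle_adj p.1 p.2)) //.
rewrite -(pair_big_dep xpredT (@cycle_adj n) (fun _ _ => 1%N)) /=.
rewrite (eq_bigr (fun _ => 2%N)); last first.
  move=> i _; rewrite (bigD1 (ordS i)) /=; last by rewrite cycle_adjE eqxx.
  rewrite (bigD1 (ord_pred i)) /=; last by rewrite cycle_adjE eqxx orbT eq_sym ordS_neq_pred.
  rewrite big1 // => j /andP [/andP [hj h1] h2]; move: hj; rewrite cycle_adjE.
  by rewrite (negbTE h1) (negbTE h2).
by rewrite sum_nat_const card_ord mulnK.
Qed.

Lemma ncomp_cycle n : ncomp (@cycle_adj n.+1) = 1%N.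
Proof.
rewrite /ncomp -(n_comp_connect (sym_connect_sym (@cycle_adj_sym n.+1)) ord0).
apply: eq_n_comp_r => x; rewrite !inE; symmetry.
suff H : forall k (hk : (k < n.+1)%N), connect (@cycle_adj n.+1) ord0 (Ordinal hk).
  by case: x => x hx; rewrite H.
elim=> [|i IH] hi.
  by have -> : Ordinal hi = ord0 by apply: val_inj. 
apply: connect_trans (IH (ltnW hi)) _; apply: connect1.
rewrite /cycle_adj; apply/orP; left; apply/eqP/val_inj => /=.
by rewrite modn_small.
Qed.

Lemma alpha_cycle n : (3 <= n.+1)%N -> alpha (@cycle_adj n.+1) = (n.+1)./2.
Proof.
move=> h3; apply/eqP; rewrite eqn_leq; apply/andP; split.
  apply/bigmax_leqP => S hS.
  have hI : S :&: (@ordS n.+1 @: S) = set0.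
    apply/setP => x; rewrite !inE; apply/negbTE/andP => -[hx /imsetP [y hy exy]].
    move/forall_inP: hS => /(_ y hy) /forall_inP /(_ x hx).
    by rewrite /cycle_adj exy eqxx.
  have : (#|S :|: @ordS n.+1 @: S| <= #|'I_n.+1|)%N := max_card _.
rewrite cardsU hI cards0.
  rewrite card_imset; last exact: ordS_inj.
  rewrite card_ord -divn2; lia.
pose f := fun k : 'I_((n.+1)./2) => (inord (k.*2) : 'I_n.+1).
have hk : forall k : 'I_((n.+1)./2), (k.*2.+1 < n.+1)%N.
  move=> k; have := ltn_ord k; move: (nat_of_ord k) => kk; rewrite -divn2; lia.
have fv : forall k, nat_of_ord (f k) = k.*2.
  by move=> k; rewrite /f inordK //; apply: ltnW (hk k).
have fS : forall k, nat_of_ord (ordS (f k)) = k.*2.+1.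
  by move=> k; rewrite ordS_val fv hk.
have finj : injective f.
  by move=> k l /(congr1 (@nat_of_ord _)); rewrite !fv -!muln2 => h; apply: ord_inj; lia.
have -> : (n.+1)./2 = #|f @: 'I_((n.+1)./2)|.
  by rewrite card_imset // card_ord.
rewrite /alpha; apply: (@leq_bigmax_cond _ (fun S : {set 'I_n.+1} => independent (@cycle_adj n.+1) S) (fun S : {set 'I_n.+1} => #|S|)).
apply/forall_inP => x /imsetP [k _ ->]; apply/forall_inP => y /imsetP [l _ ->].
rewrite /cycle_adj; apply/norP; split; apply/eqP => /(congr1 (@nat_of_ord _));
  rewrite fv fS; lia.
Qed.
Local Open Scope ring_scope.
Lemma det22 (C : comNzRingType) (A : 'M[C]_2) : \det A = A 0 0 * A 1 1 - A 0 1 * A 1 0.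
Proof.
rewrite (expand_det_row _ 0) !big_ord_recl big_ord0 /cofactor !det_mx11 !mxE /=.
have l1 : lift (0:'I_2) (0:'I_1) = 1 by apply/val_inj.
have l1' : lift (ord0:'I_2) (0:'I_1) = 1 by apply/val_inj.
have l0 : lift (1:'I_2) (0:'I_1) = 0 by apply/val_inj.
have o0 : (ord0 : 'I_2) = 0 by apply/val_inj.
rewrite ?l1 ?l1' ?o0 ?l0 /=.
rewrite !expr0 expr1 !mul1r addr0 mulN1r mulrN.
done.
Qed.


Definition ga (C : numClosedFieldType) n (phi : 'I_n.+3 -> 'I_n.+3 -> C) (i : 'I_n.+3) : C :=
  phi i (ordS i).
Definition gs (C : numClosedFieldType) n (phi : 'I_n.+3 -> 'I_n.+3 -> C) (k : nat) : C :=
  \prod_(0 <= i < k) ga phi (inord i).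
Definition gc (C : numClosedFieldType) (r : 'I_2) (k : nat) : C :=
  if odd k == (r != ord0) then (-1) ^+ k./2 else 0.
Definition gL (C : numClosedFieldType) n (phi : 'I_n.+3 -> 'I_n.+3 -> C) : 'M[C]_(2, n.+3) :=
  \matrix_(r, i) (gs phi i * gc C r i).
Definition gP (C : numClosedFieldType) n (phi : 'I_n.+3 -> 'I_n.+3 -> C) : 'M[C]_(n.+3, 2) :=
  \matrix_(i, r) (if nat_of_ord i == nat_of_ord r then
                   (if r == ord0 then 1 else (ga phi ord0)^* ) else 0).
Definition gA (C : numClosedFieldType) n (phi : 'I_n.+3 -> 'I_n.+3 -> C) : 'M[C]_(n.+3) :=
  gain_adj (@cycle_adj n.+3) phi.
Definition colidx n (r : 'I_2) : 'I_n.+3 := if r == ord0 then ord0 else ord_max.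
Definition gE (C : numClosedFieldType) n : 'M[C]_(2, n.+3) :=
  \matrix_(r, j) ((j == colidx n r)%:R).
Definition gN (C : numClosedFieldType) n (phi : 'I_n.+3 -> 'I_n.+3 -> C) := gL phi *m gA phi.
Definition gM (C : numClosedFieldType) n (phi : 'I_n.+3 -> 'I_n.+3 -> C) : 'M[C]_2 :=
  \matrix_(r, r') gN phi r (colidx n r').

Lemma ga_unit (C : numClosedFieldType) n (phi : 'I_n.+3 -> 'I_n.+3 -> C) i :
  unit_gain (@cycle_adj n.+3) phi -> ga phi i * (ga phi i)^* = 1.
Proof.
move=> hu; have [h1 _] := hu i (ordS i) (introT orP (or_introl (eqxx _))).
by rewrite /ga -normCK h1 expr1n.
Qed.

Lemma ga_conj (C : numClosedFieldType) n (phi : 'I_n.+3 -> 'I_n.+3 -> C) i :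
  unit_gain (@cycle_adj n.+3) phi -> phi (ordS i) i = (ga phi i)^*.
Proof.
by move=> hu; have [_ h2] := hu i (ordS i) (introT orP (or_introl (eqxx _))).
Qed.

Lemma mulA (C : numClosedFieldType) n (phi : 'I_n.+3 -> 'I_n.+3 -> C) m (M : 'M[C]_(m, n.+3)) r j :
  unit_gain (@cycle_adj n.+3) phi ->
  (M *m gA phi) r j = M r (ord_pred j) * ga phi (ord_pred j) + M r (ordS j) * (ga phi j)^*.
Proof.
move=> hu; rewrite !mxE (bigD1 (ord_pred j)) //= (bigD1 (ordS j)) //=; last first.
  by rewrite ordS_neq_pred.
rewrite big1 ?addr0; last first.
  move=> i /andP [h1 h2]; rewrite mxE cycle_adj_sym cycle_adjE.
  by rewrite (negbTE h1) (negbTE h2) mulr0.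
rewrite !mxE cycle_adj_sym cycle_adjE eqxx orbT.
rewrite cycle_adj_sym cycle_adjE eqxx /=; congr (_ * _ + _ * _).
  by rewrite /ga ord_predK.
exact: ga_conj.
Qed.

Lemma ordS_inord n k : (k.+1 < n.+1)%N -> ordS (inord k : 'I_n.+1) = inord k.+1.
Proof.
move=> h; apply: ord_inj; rewrite ordS_val !inordK //; last exact: ltnW.
by rewrite h.
Qed.

Lemma ordS_last n : ordS (inord n : 'I_n.+1) = ord0.
Proof. by apply: ord_inj; rewrite ordS_val !inordK // ltnn. Qed.

Lemma ord_pred_inord n k : (k.+1 < n.+1)%N -> ord_pred (inord k.+1 : 'I_n.+1) = inord k.
Proof. by move=> h; rewrite -(ordS_inord h) ordSK. Qed.

Lemma ord_pred0 n : ord_pred (ord0 : 'I_n.+1) = inord n.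
Proof. by rewrite -ordS_last ordSK. Qed.

Lemma gs0 (C : numClosedFieldType) n (phi : 'I_n.+3 -> 'I_n.+3 -> C) : gs phi 0 = 1.
Proof. by rewrite /gs big_geq. Qed.

Lemma gsS (C : numClosedFieldType) n (phi : 'I_n.+3 -> 'I_n.+3 -> C) k :
  gs phi k.+1 = gs phi k * ga phi (inord k).
Proof. by rewrite /gs big_nat_recr. Qed.

Lemma gs_gain (C : numClosedFieldType) n (phi : 'I_n.+3 -> 'I_n.+3 -> C) :
  gs phi n.+3 = cycle_gain phi.
Proof. by rewrite /gs big_mkord; apply: eq_bigr => i _; rewrite inord_val. Qed.

Lemma gs_unit (C : numClosedFieldType) n (phi : 'I_n.+3 -> 'I_n.+3 -> C) k :
  unit_gain (@cycle_adj n.+3) phi -> gs phi k * (gs phi k)^* = 1.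
Proof.
move=> hu; elim: k => [|k IH]; first by rewrite gs0 rmorph1 mulr1.
rewrite gsS rmorphM /=.
have h := ga_unit (inord k) hu.
by rewrite mulrACA IH h mulr1.
Qed.

Lemma gcSS (C : numClosedFieldType) r k : gc C r k.+2 = - gc C r k.
Proof. by rewrite /gc /= negbK; case: ifP => _; rewrite ?oppr0 // exprS mulN1r. Qed.

Lemma gN_int (C : numClosedFieldType) n (phi : 'I_n.+3 -> 'I_n.+3 -> C) r k :
  unit_gain (@cycle_adj n.+3) phi -> (k.+2 < n.+3)%N -> gN phi r (inord k.+1) = 0.
Proof.
move=> hu hk; rewrite /gN mulA // ord_pred_inord; last exact: ltnW.
rewrite ordS_inord // !mxE.
have h1 : (k < n.+3)%N by apply: ltn_trans hk; apply: ltnW.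
rewrite (inordK h1) (inordK hk) !gsS gcSS.
have h := ga_unit (inord k.+1) hu.
set a1 := ga phi (inord k.+1) in h *.
set s := gs phi k; set a := ga phi (inord k); set c := gc C r k.
have -> : s * a * a1 * - c * a1^* = - (s * c * a) * (a1 * a1^*) by ring.
by rewrite h mulr1 addrN.
Qed.

Lemma kern_uniq (C : numClosedFieldType) n (phi : 'I_n.+3 -> 'I_n.+3 -> C) (d : 'rV[C]_n.+3) :
  unit_gain (@cycle_adj n.+3) phi ->
  (forall k, (k.+2 < n.+3)%N -> (d *m gA phi) 0 (inord k.+1) = 0) ->
  d 0 (inord 0) = 0 -> d 0 (inord 1) = 0 -> d = 0.
Proof.
move=> hu hint h0 h1.
have H : forall k, (k.+1 < n.+3)%N -> d 0 (inord k) = 0 /\ d 0 (inord k.+1) = 0.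
  elim=> [|k IH] hk; first by split.
  have [hA hB] := IH (ltnW hk); split => //.
  have := hint k hk; rewrite mulA // ord_pred_inord ?ordS_inord //; last exact: ltnW.
  rewrite hA mul0r add0r => /eqP; rewrite mulf_eq0 => /orP [/eqP //|/eqP h].
  have := ga_unit (inord k.+1) hu; rewrite h mulr0 => h'.
  by have := oner_neq0 C; rewrite -h' eqxx.
apply/matrixP => i j; rewrite mxE (ord1 i).
case: j => [[|k] hk].
  by have -> : Ordinal hk = inord 0 by apply: ord_inj; rewrite inordK.
have -> : Ordinal hk = inord k.+1 by apply: ord_inj; rewrite inordK.
by have [] := H k hk.
Qed.

Lemma lift00 : lift ord0 ord0 = ord_max :> 'I_2.
Proof. exact: ord_inj. Qed.

Lemma xL (C : numClosedFieldType) n (phi : 'I_n.+3 -> 'I_n.+3 -> C) (x : 'rV[C]_2) j :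
  (x *m gL phi) 0 j = x 0 ord0 * (gs phi j * gc C ord0 j) + x 0 ord_max * (gs phi j * gc C ord_max j).
Proof. by rewrite !mxE !big_ord_recl big_ord0 addr0 lift00 !mxE. Qed.

Lemma uP (C : numClosedFieldType) n (phi : 'I_n.+3 -> 'I_n.+3 -> C) (u : 'rV[C]_n.+3) r :
  (u *m gP phi) 0 r = u 0 (inord r) * (if r == ord0 then 1 else (ga phi ord0)^* ).
Proof.
have hr : (r < n.+3)%N by apply: leq_trans (ltn_ord r) _.
rewrite !mxE (bigD1 (inord r)) //= big1 ?addr0.
  by rewrite !mxE inordK // eqxx.
move=> i hi; rewrite !mxE; case: ifP => [/eqP e|_]; last by rewrite mulr0.
move: hi; have -> : i = inord r by apply: ord_inj; rewrite inordK.
by rewrite eqxx.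
Qed.

Lemma LP (C : numClosedFieldType) n (phi : 'I_n.+3 -> 'I_n.+3 -> C) :
  unit_gain (@cycle_adj n.+3) phi -> gL phi *m gP phi = 1%:M.
Proof.
move=> hu; apply/matrixP => r r'.
have := uP phi (row r (gL phi)) r'; rewrite -row_mul mxE => ->.
rewrite !mxE inordK; last by apply: leq_trans (ltn_ord r') _.
have h := ga_unit (ord0 : 'I_n.+3) hu.
case: r => [[|[|?]] hr] //; case: r' => [[|[|?]] hr'] //=;
 rewrite /gc /= ?gs0 ?gsS ?gs0 ?mul1r ?inord_val ?mulr1 ?mul0r ?mulr0 ?mul0r //.
by have -> : inord 0 = ord0 :> 'I_n.+3 by apply: ord_inj; rewrite inordK.
Qed.

Lemma rv_sub (C : numClosedFieldType) m (A B : 'rV[C]_m) j : (A - B) 0 j = A 0 j - B 0 j.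
Proof. by rewrite !mxE. Qed.

Lemma xN_int (C : numClosedFieldType) n (phi : 'I_n.+3 -> 'I_n.+3 -> C) (x : 'rV[C]_2) k :
  unit_gain (@cycle_adj n.+3) phi -> (k.+2 < n.+3)%N -> (x *m gN phi) 0 (inord k.+1) = 0.
Proof.
by move=> hu hk; rewrite !mxE big1 // => r _; rewrite gN_int // mulr0.
Qed.

Lemma kerL (C : numClosedFieldType) n (phi : 'I_n.+3 -> 'I_n.+3 -> C) (u : 'rV[C]_n.+3) :
  unit_gain (@cycle_adj n.+3) phi -> u *m gA phi = 0 -> u = u *m gP phi *m gL phi.
Proof.
move=> hu hA; apply/eqP; rewrite -subr_eq0; apply/eqP; apply: (kern_uniq hu).
- move=> k hk; rewrite mulmxBl hA -[u *m gP phi *m gL phi *m gA phi]mulmxA -/(gN phi).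
  by rewrite rv_sub xN_int // subr0 mxE.
- rewrite rv_sub xL !uP !inordK // /gc /= gs0 !mul1r mulr0 addr0 mulr1.
  by rewrite expr0 mulr1 subrr.
- rewrite rv_sub xL !uP !inordK // /gc /= gsS gs0 !mul1r !mulr0 add0r expr0 mulr1.
  have -> : inord 0 = ord0 :> 'I_n.+3 by apply: ord_inj; rewrite inordK.
  by rewrite -mulrA (mulrC (ga _ _)^*) ga_unit // mulr1 subrr.
Qed.

Lemma row_free_L (C : numClosedFieldType) n (phi : 'I_n.+3 -> 'I_n.+3 -> C) :
  unit_gain (@cycle_adj n.+3) phi -> row_free (gL phi).
Proof.
move=> hu; rewrite /row_free eqn_leq rank_leq_row /=.
by rewrite -{1}(mxrank1 C 2) -(LP hu) mxrankM_maxl.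
Qed.

Lemma rank_AN (C : numClosedFieldType) n (phi : 'I_n.+3 -> 'I_n.+3 -> C) :
  unit_gain (@cycle_adj n.+3) phi ->
  (\rank (gA phi) + 2 = n.+3 + \rank (gN phi))%N.
Proof.
move=> hu.
have h1 := mxrank_ker (gA phi).
have h2 := mxrank_ker (gN phi).
have h3 := mxrankMfree (kermx (gN phi)) (row_free_L hu).
have h4 : \rank (kermx (gA phi)) = \rank (kermx (gN phi) *m gL phi).
  apply/eqP; rewrite eqn_leq; apply/andP; split; apply: mxrankS.
    have eK : kermx (gA phi) = kermx (gA phi) *m gP phi *m gL phi.
      apply/row_matrixP => i.
      rewrite (row_mul i (kermx (gA phi) *m gP phi)) (row_mul i (kermx (gA phi))).
      apply: (@kerL C n phi (row i (kermx (gA phi))) hu).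
      by rewrite -row_mul mulmx_ker row0.
    rewrite eK submxMr // sub_kermx /gN mulmxA -(mulmxA (kermx (gA phi))) (mulmxA (kermx (gA phi)) (gP phi)) -eK.
    by rewrite mulmx_ker.
  by rewrite sub_kermx -mulmxA -/(gN phi) mulmx_ker.
have r1 := rank_leq_row (gA phi).
have r2 := rank_leq_row (gN phi).
move: h1 h2 h3 h4 r1 r2; lia.
Qed.

Lemma colidx_neq n : (ord0 : 'I_n.+3) != ord_max.
Proof. by []. Qed.

Lemma row_free_E (C : numClosedFieldType) n : row_free (gE C n).
Proof.
rewrite /row_free eqn_leq rank_leq_row /=.
have h : (gE C n *m (gE C n)^T) = 1%:M.
  apply/matrixP => r r'; rewrite !mxE (bigD1 (colidx n r)) //= big1 ?addr0.
    rewrite !mxE eqxx mul1r.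
    by rewrite /colidx; case: r => [[|[|?]] hr] //; case: r' => [[|[|?]] hr'] //=; rewrite eqxx.
  by move=> j /negbTE hj; rewrite !mxE hj mul0r.
by rewrite -{1}(mxrank1 C 2) -h mxrankM_maxl.
Qed.

Lemma X_ME (C : numClosedFieldType) n (X : 'M[C]_(2, n.+3)) :
  (forall r k, (k.+2 < n.+3)%N -> X r (inord k.+1) = 0) ->
  X = (\matrix_(r, r') X r (colidx n r')) *m gE C n.
Proof.
move=> hX; apply/matrixP => r j; rewrite !mxE !big_ord_recl big_ord0 addr0 lift00 !mxE /colidx /=.
case: j => [[|k] hk].
  have -> : Ordinal hk = ord0 by apply: ord_inj.
  by rewrite eqxx mulr1 mulr0 addr0.
case: (k.+1 =P n.+2) => [ek|nk].
  have -> : Ordinal hk = ord_max by apply: ord_inj.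
  by rewrite eqxx mulr1 mulr0 add0r.
have -> : Ordinal hk = inord k.+1 by apply: ord_inj; rewrite inordK.
have hk2 : (k.+2 < n.+3)%N by lia.
rewrite hX //.
have e1 : (inord k.+1 == ord0 :> 'I_n.+3) = false.
  by apply/negbTE; apply/eqP => /(congr1 (@nat_of_ord _)); rewrite inordK.
have e2 : (inord k.+1 == ord_max :> 'I_n.+3) = false.
  by apply/negbTE; apply/eqP => /(congr1 (@nat_of_ord _)); rewrite inordK //= => h; apply: nk.
by rewrite e1 e2 !mulr0 addr0.
Qed.

Lemma rank_NM (C : numClosedFieldType) n (phi : 'I_n.+3 -> 'I_n.+3 -> C) :
  unit_gain (@cycle_adj n.+3) phi -> \rank (gN phi) = \rank (gM phi).
Proof.
move=> hu; rewrite [in LHS](X_ME (X := gN phi)); last by move=> r k hk; apply: gN_int.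
by rewrite mxrankMfree // row_free_E.
Qed.

Lemma ord_max_inord n : (ord_max : 'I_n.+1) = inord n.
Proof. by apply: ord_inj; rewrite inordK. Qed.

Lemma gs_last (C : numClosedFieldType) n (phi : 'I_n.+3 -> 'I_n.+3 -> C) :
  gs phi n.+2 * ga phi ord_max = cycle_gain phi.
Proof. by rewrite -gs_gain [RHS]gsS ord_max_inord. Qed.

Lemma gM0 (C : numClosedFieldType) n (phi : 'I_n.+3 -> 'I_n.+3 -> C) r :
  unit_gain (@cycle_adj n.+3) phi ->
  gM phi r ord0 = cycle_gain phi * gc C r n.+2 + gc C r 1.
Proof.
move=> hu; rewrite mxE /colidx eqxx /gN mulA // ord_pred0.
have -> : ordS (ord0 : 'I_n.+3) = inord 1 by apply: ord_inj; rewrite inordK.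
rewrite !mxE !inordK // (gsS phi 0) gs0 mul1r -ord_max_inord -gs_last.
have -> : inord 0 = ord0 :> 'I_n.+3 by apply: ord_inj; rewrite inordK.
have h := ga_unit (ord0 : 'I_n.+3) hu.
set a := ga phi ord0 in h *.
have -> : a * gc C r 1 * a^* = gc C r 1 * (a * a^*) by ring.
by rewrite h mulr1; congr (_ + _); ring.
Qed.

Lemma gM1 (C : numClosedFieldType) n (phi : 'I_n.+3 -> 'I_n.+3 -> C) r :
  unit_gain (@cycle_adj n.+3) phi ->
  gM phi r ord_max = gs phi n.+2 * gc C r n.+1 + gc C r 0 * (ga phi ord_max)^*.
Proof.
move=> hu; rewrite mxE /colidx /= /gN mulA //.
have e1 : ord_pred (ord_max : 'I_n.+3) = inord n.+1 by rewrite ord_max_inord ord_pred_inord.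
have e2 : ordS (ord_max : 'I_n.+3) = ord0 by rewrite ord_max_inord ordS_last.
rewrite e1 e2 !mxE !inordK // gs0 mul1r [gs phi n.+2]gsS.
by rewrite -mulrA (mulrC (gc _ _ _)) mulrA.
Qed.

Lemma sgn_sq (C : numClosedFieldType) k : ((-1) ^+ k : C) * (-1) ^+ k = 1.
Proof. by rewrite -exprMn mulrNN mulr1 expr1n. Qed.

Lemma sgn_conj (C : numClosedFieldType) k : (((-1) ^+ k : C))^* = (-1) ^+ k.
Proof. by rewrite rmorphXn rmorphN1. Qed.

Lemma re0 (C : numClosedFieldType) (d : C) : d * d^* = 1 -> ('Re d = 0 <-> d ^+ 2 = -1).
Proof.
move=> hd; have dn0 : d != 0 by apply/eqP => d0; move: hd; rewrite d0 mul0r => /esym/eqP; rewrite oner_eq0.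
rewrite ReE; split.
  move/eqP; rewrite mulf_eq0 invr_eq0 pnatr_eq0 orbF => /eqP h0.
  have e : d^* = - d by apply/eqP; rewrite -subr_eq0 opprK addrC h0.
  by move: hd; rewrite e mulrN -expr2 => /eqP; rewrite eqr_oppLR => /eqP.
move=> h; apply/eqP; rewrite mulf_eq0; apply/orP; left.
have : d * (d + d^*) = 0 by rewrite mulrDr hd -expr2 h addNr.
by move/eqP; rewrite mulf_eq0 (negbTE dn0).
Qed.

Lemma mx2_eq0 (C : numClosedFieldType) (M : 'M[C]_2) :
  M = 0 <-> [/\ M ord0 ord0 = 0, M ord0 ord_max = 0, M ord_max ord0 = 0 & M ord_max ord_max = 0].
Proof.
split; first by move=> ->; rewrite !mxE.
case=> h1 h2 h3 h4; apply/matrixP => r r'; rewrite mxE.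
have e0 : forall (i : 'I_2), (nat_of_ord i = 0)%N -> i = ord0 by move=> i hi; apply: ord_inj.
have e1 : forall (i : 'I_2), (nat_of_ord i = 1)%N -> i = ord_max by move=> i hi; apply: ord_inj.
case: r => [[|[|?]] hr] //; case: r' => [[|[|?]] hr'] //.
- by rewrite (e0 (Ordinal hr)) // (e0 (Ordinal hr')).
- by rewrite (e0 (Ordinal hr)) // (e1 (Ordinal hr')).
- by rewrite (e1 (Ordinal hr)) // (e0 (Ordinal hr')).
- by rewrite (e1 (Ordinal hr)) // (e1 (Ordinal hr')).
Qed.

Lemma half_facts n : (n.+2)./2 = (n./2).+1 /\ (n.+1)./2 = (odd n + n./2)%N.
Proof. by split => //=; rewrite uphalf_half. Qed.

Lemma gc_vals (C : numClosedFieldType) k :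
  [/\ gc C ord0 k = if odd k then 0 else (-1) ^+ k./2 &
      gc C ord_max k = if odd k then (-1) ^+ k./2 else 0].
Proof. by rewrite /gc; case: (odd k). Qed.

Lemma even_case (C : numClosedFieldType) n (phi : 'I_n.+3 -> 'I_n.+3 -> C) :
  unit_gain (@cycle_adj n.+3) phi -> odd n ->
  (gM phi = 0 <-> cycle_gain phi = (-1) ^+ ((n.+3) %/ 2)).
Proof.
move=> hu hn.
have [hh1 hh2] := half_facts n; rewrite hn /= in hh2.
have e3 : ((n.+3) %/ 2)%N = (n./2).+2 by rewrite divn2 /= uphalf_half hn.
set x : C := (-1) ^+ (n./2).+1.
have [c01 c11] := gc_vals C 1; have [c0n c1n] := gc_vals C n.+2.
have [c0m c1m] := gc_vals C n.+1; have [c00 c10] := gc_vals C 0.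
rewrite /= ?hn /= ?hh1 ?hh2 in c01 c11 c0n c1n c0m c1m c00 c10.
have hx := sgn_sq C (n./2).+1; rewrite -/x in hx.
have hs : gs phi n.+2 = cycle_gain phi * (ga phi ord_max)^*.
  by rewrite -gs_last -mulrA ga_unit // mulr1.
rewrite mx2_eq0 !gM0 // !gM1 // c01 c11 c0n c1n c0m c1m c00 c10 -/x e3.
rewrite [(-1) ^+ (n./2).+2]exprS mulN1r -/x expr0; split.
  case=> _ _ /eqP h _; move: h; rewrite addr_eq0 => /eqP h.
  by rewrite -[cycle_gain phi]mulr1 -hx mulrA h mulN1r.
move=> hg; split; rewrite ?hs ?hg; try ring.
  set c := (ga phi ord_max)^*.
  have -> : - x * c * x + 1 * c = c * (1 - x * x) by ring.
  by rewrite hx subrr mulr0.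
by rewrite mulNr hx addNr.
Qed.

Lemma det22' (C : numClosedFieldType) (A : 'M[C]_2) :
  \det A = A ord0 ord0 * A ord_max ord_max - A ord0 ord_max * A ord_max ord0.
Proof.
rewrite det22; have -> : (0 : 'I_2) = ord0 by apply: ord_inj.
by have -> : (1 : 'I_2) = ord_max by apply: ord_inj.
Qed.

Lemma odd_case (C : numClosedFieldType) n (phi : 'I_n.+3 -> 'I_n.+3 -> C) :
  unit_gain (@cycle_adj n.+3) phi -> ~~ odd n ->
  (\rank (gM phi) = 1%N <-> 'Re ((-1) ^+ ((n.+3 - 1) %/ 2) * cycle_gain phi) = 0).
Proof.
move=> hu hn; have hn' : odd n = false by apply: negbTE.
have [hh1 hh2] := half_facts n; rewrite hn' /= in hh2.
have e3 : ((n.+3 - 1) %/ 2)%N = (n./2).+1 by rewrite subn1 divn2 /=.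
set x : C := (-1) ^+ (n./2).+1.
have [c01 c11] := gc_vals C 1; have [c0n c1n] := gc_vals C n.+2.
have [c0m c1m] := gc_vals C n.+1; have [c00 c10] := gc_vals C 0.
rewrite /= ?hn' /= ?hh1 ?hh2 in c01 c11 c0n c1n c0m c1m c00 c10.
have hx := sgn_sq C (n./2).+1; rewrite -/x in hx.
have hxy : x * (-1) ^+ n./2 = -1 by rewrite /x exprS mulN1r mulNr sgn_sq.
set g := cycle_gain phi; set a := ga phi ord_max; set s := gs phi n.+2.
have hg : g * g^* = 1 by rewrite /g -gs_gain gs_unit.
have ha : a * a^* = 1 by rewrite /a ga_unit.
have hsa : s * a = g by rewrite /s /a /g gs_last.
have an0 : a != 0 by apply/eqP => a0; move: ha; rewrite a0 mul0r => /esym/eqP; rewrite oner_eq0.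
have hdet : \det (gM phi) = - (g * s + a^*).
  rewrite det22' !gM0 // !gM1 // c01 c11 c0n c1n c0m c1m c00 c10 -/x -/g -/s -/a.
  rewrite add0n expr0.
  set y : C := (-1) ^+ n./2 in hxy *.
  have -> : (g * x + 0) * (s * y + 0 * a^*) - (s * 0 + 1 * a^*) * (g * 0 + 1)
     = g * s * (x * y) - a^* by ring.
  by rewrite hxy; ring.
have hM10 : gM phi ord_max ord0 = 1 by rewrite gM0 // c11 c1n mulr0 add0r.
have key : \rank (gM phi) = 1%N <-> \det (gM phi) = 0.
  have hr2 := rank_leq_row (gM phi).
  have hu2 : (\rank (gM phi) == 2%N) = (\det (gM phi) != 0).
    by rewrite -[_ == 2%N]/(row_free _) row_free_unit unitmxE unitfE.
  have hr0 : \rank (gM phi) != 0%N.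
    by rewrite mxrank_eq0; apply/eqP => M0; move: hM10; rewrite M0 mxE => /eqP; rewrite eq_sym oner_eq0.
  split => [h1|h1].
    by apply/eqP; move: hu2; rewrite h1 /= => /esym /negbFE.
  by move: hu2; rewrite h1 eqxx /=; move: hr2 hr0; lia.
rewrite key hdet e3 -/x re0; last first.
  by rewrite rmorphM /= /x sgn_conj mulrACA hx hg mulr1.
rewrite exprMn [x ^+ 2]expr2 hx mul1r; split => [/eqP|h].
  rewrite oppr_eq0 => /eqP h.
  have : (g * s + a^*) * a = 0 by rewrite h mul0r.
  rewrite mulrDl -mulrA hsa (mulrC a^*) ha -expr2 => /eqP; rewrite addr_eq0 => /eqP //.
apply/eqP; rewrite oppr_eq0; apply/eqP.
have : (g * s + a^*) * a = 0 by rewrite mulrDl -mulrA hsa (mulrC a^*) ha -expr2 h addNr.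
by move/eqP; rewrite mulf_eq0 (negbTE an0) orbF => /eqP.
Qed.

Unset Implicit Arguments.

Theorem lemma4p3 (C : numClosedFieldType) (q : nat) (phi : 'I_q -> 'I_q -> C) :
  (3 <= q)%N ->
  unit_gain (@cycle_adj q) phi ->
  ((gain_rank (@cycle_adj q) phi)%:Z
     = 2 * (q%:Z) - 2 * cyclomatic (@cycle_adj q) - 2 * (alpha (@cycle_adj q))%:Z
   <->
   (~~ odd q /\ cycle_gain phi = (-1) ^+ (q %/ 2)%N)
   \/ (odd q /\ 'Re ((-1) ^+ ((q - 1) %/ 2)%N * cycle_gain phi) = 0)).
Proof.
case: q phi => [|[|[|n]]] phi // h3 hu.
have hrk : gain_rank (@cycle_adj n.+3) phi = (n.+1 + \rank (gM phi))%N.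
  have := rank_AN hu; rewrite (rank_NM hu) /gain_rank -/(gA phi); lia.
rewrite /cyclomatic nedges_cycle // card_ord ncomp_cycle alpha_cycle // hrk.
have hodd := odd_double_half n.+3.
have key : ((n.+1 + \rank (gM phi))%N%:Z = 2 * (n.+3)%:Z - 2 * ((n.+3)%:Z - (n.+3)%:Z + (1%N)%:Z)
             - 2 * ((n.+3)./2)%:Z) <-> \rank (gM phi) = odd n.+3.
  move: hodd; set h := (n.+3)./2; set r := \rank (gM phi); set o := odd n.+3.
  rewrite -muln2; case: o => /=; split; lia.
rewrite key.
have -> : odd n.+3 = ~~ odd n by rewrite /= negbK.
case hn: (odd n) => /=.
  rewrite -(even_case hu hn); split.
    by move/eqP; rewrite mxrank_eq0 => /eqP h; left.
  by case=> [[_ ->]|[]] //; rewrite mxrank0.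
rewrite -(odd_case hu (negbT hn)); split.
  by move=> h; right.
by case=> [[]|[_ h]].
Qed.
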